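(* Let $N>2$, $1<p<N$, and assume (H1)–(H4). For $a>0$ let $v_a$ be the solution on $[0,T]$ of $$(|v'(t)|^{p-2}v'(t))'+h(t)f(v(t))=0,\qquad v(0)=0,\ v'(0)=a.$$ Then $\max_{[0,T]}v_a\to\infty$ as $a\to\infty$.
   Context: Standing hypotheses. $f:\mathbb{R}\setminus\{0\}\to\mathbb{R}$ is odd and locally Lipschitz, and: (H1) there is a locally Lipschitz $g_1:\mathbb{R}\to\mathbb{R}$ and $l>p-1$ with $f(u)=|u|^{l-1}u+g_1(u)$ for all large $|u|$, and $\lim_{u\to\infty}|g_1(u)|/|u|^l=0$; (H2) there is a locally Lipschitz $g_2:\mathbb{R}\to\mathbb{R}$ with $g_2(0)=0$ and $0<m<1$ such that $f(u)=-\frac{1}{|u|^{m-1}u}+g_2(u)$ for all small $|u|\neq 0$; (H3) $f$ has a unique positive zero $\beta$, with $f<0$ on $(0,\beta)$ and $f>0$ on $(\beta,\infty)$; (H4) $K>0$ and $K'$ are continuous on $[R,\infty)$ (for a fixed $R>0$), $\frac{rK'(r)}{K(r)}>-\frac{(N-1)p}{p-1}$ on $[R,\infty)$, and there are constants $K_0,K_1>0$ with $\frac{K_0}{r^{\alpha}}\le K(r)\le \frac{K_1}{r^{\alpha_1}}$ on $[R,\infty)$, where $N+\frac{m(N-p)}{p-1}<\alpha_1\le\alpha<2(N-1)$. Notation: $T=R^{\frac{p-N}{p-1}}$ and, for $0<t\le T$, $h(t)=\left(\frac{N-p}{p-1}\right)^{-p}t^{\frac{p(N-1)}{p-N}}K\!\left(t^{\frac{p-1}{p-N}}\right)>0$.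 A solution of the initial value problem on an interval $[0,d]$ means $v\in C^1[0,d]$ such that $t\mapsto h(t)f(v(t))$ is integrable on $(0,t)$ for each $t\le d$ and $|v'(t)|^{p-2}v'(t)=a^{p-1}-\int_0^t h(s)f(v(s))\,ds$, $v(0)=0$; it exists uniquely on $[0,T]$ for each $a>0$. *)

(* Defs.v *)
From HB Require Import structures.
From mathcomp Require Import all_boot all_order all_algebra.
From mathcomp Require Import all_classical all_reals all_analysis.
Set Implicit Arguments. Unset Strict Implicit. Unset Printing Implicit Defensive.
Import Order.TTheory GRing.Theory Num.Theory.
Import numFieldNormedType.Exports.
Local Open Scope classical_set_scope.
Local Open Scope ring_scope.

Section Defs.
Variable R : realType.

Definition locally_lipschitz_on (D : set R) (f : R -> R) : Prop :=
  forall x, D x -> exists d : R, 0 < d /\ exists L : R,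
    forall y z, D y -> D z -> `|y - x| < d -> `|z - x| < d ->
      `|f y - f z| <= L * `|y - z|.

Definition punct : set R := [set u | u != 0].

Definition odd_fun (f : R -> R) : Prop := forall u, u != 0 -> f (- u) = - f u.

Definition H1 (p : R) (f : R -> R) : Prop :=
  exists g1 : R -> R, locally_lipschitz_on setT g1 /\
  exists l : R, p - 1 < l /\
  (exists M : R, forall u, M < `|u| -> f u = `|u| `^ (l - 1) * u + g1 u) /\
  ((fun u => `|g1 u| / `|u| `^ l) @ +oo --> (0 : R)).

(* the exponent m is a parameter since it also appears in (H4) *)
Definition H2 (m : R) (f : R -> R) : Prop :=
  exists g2 : R -> R, locally_lipschitz_on setT g2 /\ g2 0 = 0 /\
  0 < m < 1 /\
  exists d : R, 0 < d /\
    forall u, u != 0 -> `|u| < d -> f u = - (`|u| `^ (m - 1) * u)^-1 + g2 u.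

Definition H3 (f : R -> R) : Prop :=
  exists beta : R, 0 < beta /\ f beta = 0 /\
    (forall u, 0 < u < beta -> f u < 0) /\ (forall u, beta < u -> 0 < f u) /\
    (forall u, 0 < u -> f u = 0 -> u = beta).

(* (H4): K and K' continuous on [R0, oo) (K' is the derivative of K there:
   K is differentiable with derivative K' on (R0, oo), K, K' continuous on
   [R0, oo), which is the C^1 condition on the closed half-line). *)
Definition H4 (N p m : R) (R0 : R) (K : R -> R) : Prop :=
  exists K' : R -> R,
    {within `[R0, +oo[, continuous K} /\ {within `[R0, +oo[, continuous K'} /\
    (forall r, R0 < r -> is_derive r 1 K (K' r)) /\
    (forall r, R0 <= r -> 0 < K r) /\
    (forall r, R0 <= r -> - ((N - 1) * p / (p - 1)) < r * K' r / K r) /\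
    exists K0 K1 alpha alpha1 : R, 0 < K0 /\ 0 < K1 /\
      N + m * (N - p) / (p - 1) < alpha1 /\ alpha1 <= alpha /\
      alpha < 2 * (N - 1) /\
      (forall r, R0 <= r ->
         K0 / r `^ alpha <= K r /\ K r <= K1 / r `^ alpha1).

Definition Tend (N p R0 : R) : R := R0 `^ ((p - N) / (p - 1)).

Definition hfun (N p : R) (K : R -> R) (t : R) : R :=
  ((N - p) / (p - 1)) `^ (- p) * t `^ (p * (N - 1) / (p - N))
    * K (t `^ ((p - 1) / (p - N))).

Definition phip (p x : R) : R := `|x| `^ (p - 2) * x.

Definition is_solution (N p : R) (K f : R -> R) (a d : R) (v : R -> R) : Prop :=
  exists v' : R -> R,
    {within `[0, d], continuous v} /\ {within `[0, d], continuous v'} /\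
    (forall t, 0 < t < d -> is_derive t 1 v (v' t)) /\
    v 0 = 0 /\
    (forall t, 0 < t <= d ->
       (@lebesgue_measure R).-integrable `]0, t[
          (fun s => ((hfun N p K s) * f (v s))%:E)) /\
    (forall t, 0 <= t <= d ->
       phip p (v' t) = a `^ (p - 1)
         - Rintegral (@lebesgue_measure R) `]0, t[ (fun s => hfun N p K s * f (v s))).

End Defs.

(* Main.v *)
Require Import Defs.
From HB Require Import structures.
From mathcomp Require Import all_boot all_order all_algebra.
From mathcomp Require Import all_classical all_reals all_analysis.
From mathcomp Require Import ring lra.
Import Order.TTheory GRing.Theory Num.Theory.
Import numFieldNormedType.Exports.
Local Open Scope classical_set_scope.
Local Open Scope ring_scope.
Section S.
Context {R : realType}.
Notation mu := (@lebesgue_measure R).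

Lemma Rint_subset (g : R -> R) (A B : set R) : measurable A -> measurable B ->
  A `<=` B -> (forall x, B x -> 0 <= g x) -> mu.-integrable B (EFin \o g) ->
  Rintegral mu A g <= Rintegral mu B g.
Proof.
move=> mA mB AB g0 ig.
have igA : mu.-integrable A (EFin \o g) by exact: integrableS ig.
rewrite /Rintegral; apply: fine_le.
- exact: integrable_fin_num igA.
- exact: integrable_fin_num ig.
apply: ge0_subset_integral => //.
- by case/integrableP: ig.

Qed.

Lemma int_bound (g1 g2 : R -> R) (C t d : R) : 0 < t <= d ->
  mu.-integrable `]0, t[ (EFin \o g1) -> mu.-integrable `]0, d[ (EFin \o g2) ->
  (forall s, 0 < s < t -> g1 s <= C * `|g2 s|) -> 0 <= C ->
  Rintegral mu `]0, t[ g1 <= C * Rintegral mu `]0, d[ (fun s => `|g2 s|).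
Proof.
move=> /andP[t0 td] i1 i2 H C0.
have i2t : mu.-integrable `]0, t[ (EFin \o g2).
  apply: integrableS i2 => //; apply: subset_itvl; rewrite bnd_simp //.
have i2a := integrable_norm i2t.
have i2b : mu.-integrable `]0, t[ (EFin \o (fun s => C * `|g2 s|)).
  have := @integrableZl _ _ _ mu `]0, t[ _ C _ i2a; apply => //.
apply: (@le_trans _ _ (Rintegral mu `]0, t[ (fun s => C * `|g2 s|))).
  apply: le_Rintegral => //.
rewrite RintegralZl //; apply: ler_wpM2l => //.
apply: Rint_subset => //.
all: try exact: (integrable_norm i2).
all: try by apply: subset_itvl; rewrite bnd_simp.
Qed.

Lemma cont_eps (g : R -> R) (A : set R) x :
  {within A, continuous g} -> A x -> forall e, 0 < e ->
  exists d, 0 < d /\ forall y, A y -> `|y - x| < d -> `|g y - g x| < e.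
Proof.
move=> /subspace_continuousP H Ax e e0.
have := H x Ax. move/cvgrPdist_lt => /(_ e e0).
rewrite /within /= => /nbhs_ballP [d /= d0 Hd].
exists d; split => // y Ay yx.
rewrite distrC; apply: Hd => //.
by rewrite /ball /= distrC.
Qed.

Lemma mvt0 (v w : R -> R) T s : 0 < s <= T -> {within `[0, T], continuous v} ->
  (forall t, 0 < t < T -> is_derive t 1 v (w t)) ->
  exists c, 0 < c < s /\ v s - v 0 = w c * s.
Proof.
move=> /andP[s0 sT] cv dv.
have [||c cin eq] := @MVT R v w 0 s s0.
- move=> x; rewrite in_itv /= => /andP[x0 xs]; apply: dv.
  by rewrite x0 /= (lt_le_trans xs sT).
- apply: continuous_subspaceW cv; apply: subset_itvl; by rewrite bnd_simp.
- by exists c; split; [rewrite in_itv /= in cin|rewrite eq subr0].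
Qed.

Lemma pos_near0 (v w : R -> R) T : 0 < T -> {within `[0, T], continuous v} ->
  {within `[0, T], continuous w} ->
  (forall t, 0 < t < T -> is_derive t 1 v (w t)) -> 0 < w 0 ->
  exists e, 0 < e <= T /\ forall s, 0 < s <= e -> v 0 < v s.
Proof.
move=> T0 cv cw dv w0.
have I0 : `[0, T]%classic 0 by rewrite /= in_itv /= lexx ltW.
have [d [d0 Hd]] := @cont_eps w `[0, T] 0 cw I0 (w 0) w0.
exists (Num.min (d / 2) T); split.
  by rewrite lt_min T0 divr_gt0 //= ge_min lexx orbT.
move=> s /andP[s0 se].
have sT : s <= T by move: se; rewrite le_min => /andP[].
have sd : s < d.
  move: se; rewrite le_min => /andP[+ _] => H; apply: (le_lt_trans H).
  by rewrite ltr_pdivrMr // ltr_pMr // ltr1n.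
have s0T : 0 < s <= T by rewrite s0.
have [c [/andP[c0 cs] eq]] := @mvt0 v w T s s0T cv dv.
have wc : 0 < w c.
  have := Hd c _ _.
  rewrite subr0 => H.
  have {}H := H _ _.
  have : `|w c - w 0| < w 0.
    apply: H; first by rewrite /= in_itv /= ltW //= (ltW (lt_le_trans cs sT)).
    by rewrite gtr0_norm // (lt_trans cs sd).
  rewrite ltr_norml => /andP[+ _]; rewrite ltrBrDr; lra.
rewrite -subr_gt0 eq; exact: mulr_gt0.
Qed.

Lemma phip_pos (p x : R) : 0 < phip p x -> 0 < x.
Proof.
rewrite /phip => H; rewrite ltNge; apply/negP => x0.
move: H; rewrite ltNge => /negP; apply.
by apply: mulr_ge0_le0 => //; exact: powR_ge0.
Qed.

Lemma phip_gt0E (p x : R) : 1 < p -> 0 < x -> phip p x = x `^ (p - 1).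
Proof.
move=> p1 x0; rewrite /phip gtr0_norm // -[X in _ * X]powRr1 ?ltW //.
rewrite -powRD; last by apply/implyP => _; rewrite gt_eqF.
congr (_ `^ _); ring.
Qed.

Lemma phip_lb (p x a : R) : 1 < p -> 0 < a ->
  a `^ (p - 1) / 2 <= phip p x -> (2^-1) `^ (p - 1)^-1 * a <= x.
Proof.
move=> p1 a0 H.
have x0 : 0 < x.
  apply: phip_pos; apply: lt_le_trans H; apply: divr_gt0 => //; exact: powR_gt0.
rewrite phip_gt0E // in H.
have p10 : 0 < p - 1 by rewrite subr_gt0.
rewrite leNgt; apply/negP => Hx.
have := @gt0_ltr_powR R (p - 1) p10 x _ _ _ Hx.
rewrite !nnegrE ltW // => /(_ isT).
rewrite mulr_ge0 ?powR_ge0 ?ltW // => /(_ isT).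
rewrite powRM ?powR_ge0 ?ltW // -powRrM mulVf ?gt_eqF // powRr1; last by [].
by rewrite mulrC -[_ * 2^-1]/(_ / 2) ltNge H.
Qed.

Lemma lip_cont (f : R -> R) x : locally_lipschitz_on (@punct R) f -> 0 < x ->
  {for x, continuous f}.
Proof.
move=> Hl x0.
have [|d [d0 [L HL]]] := Hl x; first by rewrite /punct /= gt_eqF.
apply/cvgrPdist_lt => e e0.
apply/nbhs_ballP; exists (Num.min (Num.min d x) (e / (`|L| + 1))).
  by rewrite /= !lt_min d0 x0 /= divr_gt0 // ltr_pwDr.
move=> y; rewrite /ball /= !lt_min => /andP[/andP[yd yx] ye].
have y0 : y != 0.
  apply/negP => /eqP y0; move: yx; rewrite y0 ?subr0 ?sub0r ?normrN gtr0_norm //.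
  by rewrite ltxx.
have := HL x y _ _ _ _.
rewrite /punct /= gt_eqF // => /(_ isT y0).
rewrite subrr normr0 d0 distrC yd => /(_ isT isT) H.
apply: (le_lt_trans H).
apply: (@le_lt_trans _ _ (`|L| * `|y - x|)).
  by rewrite distrC; apply: ler_wpM2r => //; exact: ler_norm.
have : `|y - x| * (`|L| + 1) < e.
  by rewrite -ltr_pdivlMr ?ltr_pwDr // distrC.
have := normr_ge0 (y - x); have := normr_ge0 L; nra.
Qed.

Lemma f_ub (f : R -> R) (M : R) : locally_lipschitz_on (@punct R) f -> H3 f ->
  exists C, 0 <= C /\ forall u, 0 < u <= M -> f u <= C.
Proof.
move=> Hl [be [be0 [fbe [Hlt [Hgt _]]]]].
have [Mb|bM] := ltP M be.
  exists 0; split => // u /andP[u0 uM]; apply: ltW; apply: Hlt.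
  by rewrite u0 (le_lt_trans uM Mb).
have cf : {within `[be, M], continuous f}.
  apply: continuous_in_subspaceT => x; rewrite inE /= in_itv /= => /andP[bx _].
  exact: lip_cont (lt_le_trans be0 bx).
have [c _ Hc] := EVT_max bM cf.
exists (Num.max 0 (f c)); split; first by rewrite le_max lexx.
move=> u /andP[u0 uM].
have [ub|bu] := ltP u be.
  by rewrite le_max; apply/orP; left; apply: ltW; apply: Hlt; rewrite u0 ub.
rewrite le_max; apply/orP; right; apply: Hc; by rewrite in_itv /= bu uM.
Qed.

Lemma f_near0 (f : R -> R) m : H2 m f ->
  exists u1, 0 < u1 /\ forall u, 0 < u < u1 -> f u <= -1.
Proof.
move=> [g2 [Hl [g20 [/andP[m0 m1] [d [d0 Hf]]]]]].
have [//|d1 [d10 [L HL]]] := Hl 0.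
set u0 := (2^-1 : R) `^ m^-1.
have u00 : 0 < u0 by apply: powR_gt0.
exists (Num.min (Num.min d d1) (Num.min u0 (1 / (`|L| + 1)))).
split; first by rewrite !lt_min d0 d10 u00 divr_gt0 // ltr_pwDr.
move=> u /andP[u0p]; rewrite !lt_min => /andP[/andP[ud ud1] /andP[uu0 uL]].
rewrite Hf ?gt_eqF ?gtr0_norm //.
have : `|g2 u - g2 0| <= L * `|u - 0| by apply: HL; rewrite // subr0 ?normr0 ?gtr0_norm.
rewrite g20 !subr0 [`|u|]gtr0_norm // => Hg.
have gu : g2 u <= 1.
  apply: (le_trans (ler_norm _)); apply: (le_trans Hg).
  apply: (le_trans (ler_norm _ : L * u <= `|L * u|)); rewrite normrM [`|u|]gtr0_norm //.
  move: uL; rewrite ltr_pdivlMr ?ltr_pwDr // => uL.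
  have := normr_ge0 L; nra.
have um : u `^ (m - 1) * u = u `^ m by rewrite mulrC mulr_powRB1 // ltW.
rewrite um.
have : u `^ m < 2^-1.
  have := @gt0_ltr_powR R m m0 u u0 _ _ uu0.
  rewrite !nnegrE ltW // => /(_ isT).
  rewrite ltW // => /(_ isT).
  by rewrite /u0 -powRrM mulVf ?gt_eqF // powRr1.
have := @powR_gt0 R u m u0p.
set y := u `^ m => y0 yh.
have yy : y * y^-1 = 1 by rewrite divff // gt_eqF.
nra.
Qed.

Lemma h_ge0 (N p m R0 : R) K s : 1 < p -> p < N -> 0 < R0 -> H4 N p m R0 K ->
  0 < s <= Tend N p R0 -> 0 <= hfun N p K s.
Proof.
move=> p1 pN R00 [K' [_ [_ [_ [Kpos _]]]]] /andP[s0 sT].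
rewrite /hfun; apply: mulr_ge0; first by apply: mulr_ge0; exact: powR_ge0.
apply: ltW; apply: Kpos.
set r := (p - 1) / (N - p).
have r0 : 0 < r by rewrite divr_gt0 // subr_gt0.
have qr : (p - 1) / (p - N) = - r.
  rewrite /r -mulrN -invrN opprB //.
rewrite qr !powRN.
have Tq : (Tend N p R0) `^ r = R0^-1.
  rewrite /Tend -powRrM -[R0^-1]powR_inv1 ?ltW //; congr (_ `^ _).
  rewrite /r; field.
  by apply/andP; split; rewrite subr_eq0 ?gt_eqF // lt_eqF.
have T0 : 0 < Tend N p R0 by apply: powR_gt0.
have := @ge0_ler_powR R r (ltW r0) s (Tend N p R0) _ _ sT.
rewrite !nnegrE ltW // ltW // => /(_ isT isT); rewrite Tq => H.
rewrite -(invrK R0) ler_pV2 //; rewrite inE /= ?unitfE ?gt_eqF ?invr_gt0 ?powR_gt0 //.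
Qed.
End S.
Arguments cont_eps {R g A x}.
Arguments mvt0 {R v w T s}.
Arguments pos_near0 {R v w T}.
Arguments phip_pos {R p x}.
Arguments phip_gt0E {R p x}.
Arguments phip_lb {R p x a}.
Arguments lip_cont {R f x}.
Arguments f_ub {R f} M.
Arguments f_near0 {R f m}.
Arguments h_ge0 {R N p m R0 K s}.
Arguments int_bound {R g1 g2 C t d}.

Theorem lemma2p4 (R : realType) (N : nat) (p : R) (f K : R -> R) (R0 m : R)
  (v : R -> R -> R) :
  (2 < N)%N -> 1 < p -> p < N%:R ->
  odd_fun f -> locally_lipschitz_on (@punct R) f ->
  H1 p f ->
  H2 m f ->
  H3 f ->
  0 < R0 -> H4 N%:R p m R0 K ->
  (forall a, 0 < a -> is_solution N%:R p K f a (Tend N%:R p R0) (v a)) ->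
  forall M : R, exists A : R, forall a, A < a ->
    exists t, 0 <= t <= Tend N%:R p R0 /\ M < v a t.
Proof.
move=> HN p1 pN fodd flip H1f H2f H3f R00 H4K Hsol M.
set T := Tend N%:R p R0.
have T0 : 0 < T by apply: powR_gt0.
have [u1 [u10 Hu1]] := f_near0 H2f.
have [C [C0 HC]] := f_ub M flip H3f.
have w0pos : forall a (w : R -> R), 0 < a ->
    phip p (w 0) = a `^ (p - 1) - Rintegral (@lebesgue_measure R) `]0, 0[
         (fun s => hfun N%:R p K s * f (v a s)) -> 0 < w 0.
  move=> a w a0; rewrite set_itvoo0 Rintegral_set0 subr0 => H.
  by apply: (@phip_pos _ p); rewrite H powR_gt0.
have [w1 [cv1 [cw1 [dv1 [v10 [int1 eq1]]]]]] := Hsol 1 ltr01.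
have w10 : 0 < w1 0 by apply: (w0pos 1) => //; apply: eq1; rewrite lexx ltW.
have [e1 [/andP[e10 e1T] Hv1pos]] := pos_near0 T0 cv1 cw1 dv1 w10.
have I0 : `[0, T]%classic 0 by rewrite /= in_itv /= lexx ltW.
have [d1 [d10 Hd1]] := @cont_eps R (v 1) `[0, T] 0 cv1 I0 u1 u10.
set de := Num.min e1 d1.
have de0 : 0 < de by rewrite lt_min e10 d10.
have deT : de <= T by rewrite ge_min e1T.
have f1 : forall s, 0 < s < de -> 1 <= `|f (v 1 s)|.
  move=> s /andP[s0 sd].
  have se : s <= e1 by apply: ltW; apply: (lt_le_trans sd); rewrite ge_min lexx.
  have sd1 : s < d1 by apply: (lt_le_trans sd); rewrite ge_min lexx orbT.
  have vpos := Hv1pos s (andb_true_intro (conj s0 se)).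
  rewrite v10 in vpos.
  have := Hd1 s _ _.
  rewrite v10 subr0 subr0 gtr0_norm // gtr0_norm // => /(_ _ sd1) H.
  have := H _.
  have sT : s <= T by apply: (le_trans se).
  rewrite /= in_itv /= (ltW s0) sT => /(_ isT) vu.
  have := Hu1 (v 1 s) _; rewrite vpos vu => /(_ isT) fv.
  have fn : f (v 1 s) <= 0 by apply: (le_trans fv); rewrite lerN10.
  rewrite ler0_norm //; move: fv fn; clear; move=> fv fn; lra.
set H0 := Rintegral (@lebesgue_measure R) `]0, de[
   (fun s => `|hfun N%:R p K s * f (v 1 s)|).
have H00 : 0 <= H0 by apply: Rintegral_ge0 => x _; exact: normr_ge0.
have intde : (@lebesgue_measure R).-integrable `]0, de[
    (EFin \o (fun s => hfun N%:R p K s * f (v 1 s))).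
  have iT := int1 T (andb_true_intro (conj T0 (lexx T))).
  by apply: integrableS iT => //; apply: subset_itvl; rewrite bnd_simp.
set k : R := (2^-1) `^ (p - 1)^-1.
have k0 : 0 < k by apply: powR_gt0.
have kd0 : 0 < k * de by apply: mulr_gt0.
set B := (2 * C * H0) `^ (p - 1)^-1.
exists (Num.max (Num.max 0 B) (M / (k * de))).
move=> a; rewrite !gt_max => /andP[/andP[a0 aB] aM].
have [w [cv [cw [dv [v0 [inta eqa]]]]]] := Hsol a a0.
case: (pselect (exists t, 0 <= t <= T /\ M < v a t)) => // notex.
have vle : forall t, 0 <= t <= T -> v a t <= M.
  move=> t tT; rewrite leNgt; apply/negP => Mt; apply: notex; by exists t.
have p10 : 0 < p - 1 by rewrite subr_gt0.
have CHa : 2 * C * H0 < a `^ (p - 1).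
  have B0 : 0 <= B by apply: powR_ge0.
  have := @gt0_ltr_powR R (p - 1) p10 B a _ _ aB.
  rewrite !nnegrE B0 ltW // => /(_ isT isT).
  by rewrite /B -powRrM mulVf ?gt_eqF // powRr1 // !mulr_ge0.
have phib : forall t, 0 <= t <= de -> (forall s, 0 < s < t -> 0 < v a s) ->
    a `^ (p - 1) / 2 <= phip p (w t).
  move=> t /andP[t0 tde] Hpos.
  rewrite eqa; last by rewrite t0 (le_trans tde deT).
  suff : Rintegral (@lebesgue_measure R) `]0, t[
     (fun s => hfun N%:R p K s * f (v a s)) <= C * H0 by lra.
  move: t0; rewrite le_eqVlt => /orP[/eqP <-|t0].
    by rewrite set_itvoo0 Rintegral_set0 mulr_ge0.
  apply: int_bound => //.
  - by rewrite t0 tde.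
  - apply: inta; by rewrite t0 (le_trans tde deT).
  move=> s /andP[s0 st].
  have sde : s < de by apply: (lt_le_trans st).
  have sT : s <= T by apply: ltW; apply: (lt_le_trans sde).
  have hs : 0 <= hfun N%:R p K s.
    by apply: (h_ge0 (m := m) (R0 := R0) p1 pN R00 H4K); rewrite s0.
  have vs := Hpos s (andb_true_intro (conj s0 st)).
  have fv : f (v a s) <= C.
    by apply: HC; rewrite vs vle // (ltW s0) sT.
  have := f1 s (andb_true_intro (conj s0 sde)).
  rewrite normrM (ger0_norm hs) => z1.
  apply: (le_trans (ler_wpM2l hs fv)); rewrite mulrC; apply: ler_wpM2l => //.
  by rewrite ler_peMr.
have [e [/andP[e0 eT] Hvpos]] := pos_near0 T0 cv cw dv
  (w0pos a w a0 (eqa 0 (andb_true_intro (conj (lexx 0) (ltW T0))))).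
rewrite v0 in Hvpos.
have stepA : forall s, 0 < s < de -> 0 < v a s.
  move=> s0 /andP[s00 s0de]; rewrite ltNge; apply/negP => vs0.
  set S := [set t | 0 < t < de /\ v a t <= 0].
  have hS : has_lbound S by exists 0 => y [/andP[y0 _] _]; exact: ltW.
  have neS : S s0 by split => //; rewrite s00.
  set t0 := inf S.
  have t0s0 : t0 <= s0 by exact: ge_inf hS s0 neS.
  have et0 : e <= t0.
    apply: lb_le_inf; first by exists s0.
    move=> y [/andP[y0 yde] vy]; rewrite leNgt; apply/negP => ye.
    have := Hvpos y _; rewrite y0 (ltW ye) => /(_ isT).
    by rewrite ltNge vy.
  have t00 : 0 < t0 by apply: lt_le_trans et0.
  have t0T : t0 <= T by apply: (le_trans t0s0); apply: ltW; apply: (lt_le_trans s0de).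
  have posb : forall s, 0 < s < t0 -> 0 < v a s.
    move=> s /andP[sp st]; rewrite ltNge; apply/negP => vs.
    have sde : s < de by apply: (lt_trans st); apply: (le_lt_trans t0s0).
    have : S s by split => //; rewrite sp sde.
    move/(ge_inf hS); rewrite -/t0 leNgt st //.
  have vt0 : v a t0 <= 0.
    rewrite leNgt; apply/negP => vt.
    have It0 : `[0, T]%classic t0 by rewrite /= in_itv /= (ltW t00) t0T.
    have [d [d0 Hd]] := @cont_eps R (v a) `[0, T] t0 cv It0 (v a t0) vt.
    have [y Sy yd] := @inf_adherent R S d d0 (conj (ex_intro _ s0 neS) hS).
    have t0y : t0 <= y by exact: ge_inf hS y Sy.
    case: Sy => /andP[y0 yde] vy.
    have := Hd y _ _.
    rewrite /= in_itv /= (ltW y0) (le_trans (ltW yde) deT) => /(_ isT).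
    rewrite ger0_norm ?subr_ge0 // ltrBlDr -/t0 addrC yd => /(_ isT).
    rewrite ltr_norml => /andP[+ _]; lra.
  have t0P : 0 < t0 <= T by rewrite t00 t0T.
  have [c [/andP[c0 ct] eqc]] := mvt0 t0P cv dv.
  have wc : 0 < w c.
    apply: phip_pos; apply: lt_le_trans (phib c _ _).
    - by apply: divr_gt0 => //; exact: powR_gt0.
    - rewrite (ltW c0) /=; apply: ltW; apply: (lt_le_trans ct).
      apply: (le_trans t0s0); exact: ltW.
    - move=> s /andP[sp sc]; apply: posb; by rewrite sp (lt_trans sc).
  move: eqc; rewrite v0 subr0 => eqc.
  have : 0 < v a t0 by rewrite eqc mulr_gt0.
  by rewrite ltNge vt0.
have deP : 0 < de <= T by rewrite de0 deT.
have [c [/andP[c0 cd] eqc]] := mvt0 deP cv dv.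
have wc : k * a <= w c.
  apply: phip_lb => //; apply: phib; first by rewrite (ltW c0) (ltW cd).
  move=> s /andP[s0 sc]; apply: stepA; by rewrite s0 (lt_trans sc).
have := vle de _; rewrite (ltW de0) deT => /(_ isT).
move: eqc; rewrite v0 subr0 => ->.
move: aM; rewrite ltr_pdivrMr // => aM.
have : k * a * de <= w c * de by rewrite ler_wpM2r // ltW.
lra.
Qed.
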